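(* Let $h$ be the concatenation of two uniformly distributed $\ell$-bit streams, let $x$ be a uniformly distributed $\ell$-bit stream, and let $z$ be any $\ell$-bit stream. Then $$G(z\boxplus h\vdash x\boxplus h)_\ell=G(z,z\boxplus h\vdash x\boxplus h)_\ell=\left(\tfrac34\right)^\ell.$$
   Context: For $x\in\mathbb{Z}_2^\ell$ and $h=h^{(0)}::h^{(1)}$ with $h^{(0)},h^{(1)}\in\mathbb{Z}_2^\ell$, $(x\boxplus h)_i=h^{(x_i)}_i$. The random values $x,h^{(0)},h^{(1)}$ are independent of each other and of $z$. $G(\Xi\vdash\Theta)$ is the guessing chance: the maximal probability, over randomized guessing procedures, of outputting $\Theta$ on input $\Xi$, the probability over the random values, as a sequence in $\ell$ considered up to negligible difference. *)

(* Defs.v *)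
From mathcomp Require Import all_boot all_order all_algebra.
From mathcomp Require Import classical_sets reals.
Set Implicit Arguments. Unset Strict Implicit. Unset Printing Implicit Defensive.
Import Order.TTheory GRing.Theory Num.Theory.
Local Open Scope ring_scope.
Local Open Scope classical_set_scope.

Definition bits (l : nat) := {ffun 'I_l -> bool}.

(* h = h0 :: h1 is a 2l-bit stream; h^(0) is its first half, h^(1) its second. *)
Definition hpart (l : nat) (b : bool) (h : bits (l + l)) : bits l :=
  [ffun i => if b then h (rshift l i) else h (lshift l i)].

Definition boxplus (l : nat) (x : bits l) (h : bits (l + l)) : bits l :=
  [ffun i => hpart (x i) h i].

(* randomized guessing procedure: a stochastic kernel from inputs to outputs *)
Definition kernel (R : realType) (I O : finType) (K : I -> O -> R) : Prop :=
  (forall i o, 0 <= K i o) /\ (forall i, \sum_(o : O) K i o = 1).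

Definition guess_chance (R : realType) (Omega I O : finType)
  (P : Omega -> R) (X : Omega -> I) (Y : Omega -> O) : R :=
  sup [set r : R | exists K : I -> O -> R,
         kernel K /\ r = \sum_(w : Omega) P w * K (X w) (Y w)].

Definition negligible (R : realType) (f : nat -> R) : Prop :=
  forall c : nat, exists N : nat, forall n : nat, (N <= n)%N ->
    `|f n| < ((n%:R) ^+ c)^-1.

Definition eq_negl (R : realType) (f g : nat -> R) : Prop :=
  negligible (fun n => f n - g n).

(* sample space at length l : (z, x, h) *)
Definition sample (l : nat) : finType := (bits l * bits l * bits (l + l))%type.

(* z has an arbitrary distribution pz (independent), x and h are uniform *)
Definition sample_prob (R : realType) (l : nat) (pz : bits l -> R)
  (w : sample l) : R :=
  pz w.1.1 * (#|{: bits l}|%:R)^-1 * (#|{: bits (l + l)}|%:R)^-1.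

(* Main.v *)
Require Import Defs.
From mathcomp Require Import all_boot all_order all_algebra.
From mathcomp Require Import classical_sets reals ring.
Import Order.TTheory GRing.Theory Num.Theory.
Set Implicit Arguments. Unset Strict Implicit. Unset Printing Implicit Defensive.

Definition key l (w : sample l) : bits l * bits l * bits l :=
  (w.1.1, boxplus w.1.1 w.2, boxplus w.1.2 w.2).
Definition cnt l (k : bits l * bits l * bits l) := #|[pred w : sample l | key w == k]|.

Definition enc l (z : bits l) (w : sample l) : {ffun 'I_l -> option bool} :=
  [ffun i => if w.1.2 i == z i then Some (hpart (~~ z i) w.2 i) else None].

Lemma hpart_eq l (h h' : bits (l+l)) : (forall b i, hpart b h i = hpart b h' i) -> h = h'.
Proof.
move=> H; apply/ffunP => j; case: (splitP j) => [i|i] /= Hj.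
- have -> : j = lshift l i by apply/val_inj.
  by have := H false i; rewrite !ffunE.
- have -> : j = rshift l i by apply/val_inj.
  by have := H true i; rewrite !ffunE.
Qed.

Definition mkh l (f : bool -> 'I_l -> bool) : bits (l + l) :=
  [ffun j => match split j with inl i => f false i | inr i => f true i end].

Lemma hpart_mkh l f b (i : 'I_l) : hpart b (mkh f) i = f b i.
Proof.
rewrite ffunE; case: b; rewrite ffunE.
- by have E := @unsplitK l l (inr i); rewrite /= in E; rewrite E.
- by have E := @unsplitK l l (inl i); rewrite /= in E; rewrite E.
Qed.

Lemma cnt_le l (z y t : bits l) : (cnt (z,y,t) <= 3 ^ l)%N.
Proof.
rewrite /cnt -(card_in_imset (f := enc z)).
  apply: leq_trans (max_card _) _.
  by rewrite card_ffun card_option card_bool card_ord.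
move=> [[z1 x1] h1] [[z2 x2] h2]; rewrite !inE /key /=.
move=> /eqP[e1 e2 e3] /eqP[f1 f2 f3]; subst z1 z2 => /ffunP E.
have Ex : x1 = x2.
  apply/ffunP => i; have := E i; rewrite !ffunE.
  by case: (x1 i); case: (x2 i); case: (z i).
subst x2; congr (_, _); apply: hpart_eq => b i.
have := E i; rewrite !ffunE.
have := congr1 (fun f : bits l => f i) e2; have := congr1 (fun f : bits l => f i) f2.
have := congr1 (fun f : bits l => f i) e3; have := congr1 (fun f : bits l => f i) f3.
rewrite !ffunE.
case: b; case: (z i); case: (x1 i) => /=; try congruence.
Qed.

Definition dec l (z y : bits l) (c : {ffun 'I_l -> option bool}) : sample l :=
  ((z, [ffun i => if c i is Some _ then z i else ~~ z i]),
   mkh (fun b i => if b == z i then y i else if c i is Some v then v else y i)).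

Lemma cnt_ge l (z y : bits l) : (3 ^ l <= cnt (z,y,y))%N.
Proof.
have K : cancel (dec z y) (enc z).
  move=> c; apply/ffunP => i; rewrite ffunE /= hpart_mkh ffunE.
  by case: (c i) => [v|]; case: (z i).
have -> : (3 ^ l = #|[set dec z y c | c in [set: {ffun 'I_l -> option bool}]]|)%N.
  by rewrite card_imset ?cardsT ?card_ffun ?card_option ?card_bool ?card_ord //; apply: can_inj K.
rewrite /cnt; apply: subset_leq_card; apply/fintype.subsetP => w /imsetP[c _ ->]; rewrite inE /key /=.
apply/eqP; congr (_, _, _); apply/ffunP => i; rewrite ffunE hpart_mkh ?ffunE.
  by rewrite eqxx.
by case: (c i) => [v|]; rewrite ?eqxx //; case: (z i).
Qed.

Local Open Scope ring_scope.

Definition Gk (R : realType) l (pz : bits l -> R) (Kz : bits l -> bits l -> bits l -> R)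
  (k : bits l * bits l * bits l) : R :=
  pz k.1.1 * (#|{: bits l}|%:R)^-1 * (#|{: bits (l + l)}|%:R)^-1 * Kz k.1.1 k.1.2 k.2.

Lemma value_eq (R : realType) l (pz : bits l -> R) Kz :
  \sum_(w : sample l) sample_prob pz w * Kz w.1.1 (boxplus w.1.1 w.2) (boxplus w.1.2 w.2)
  = \sum_k Gk pz Kz k *+ cnt k.
Proof.
rewrite (partition_big (@key l) xpredT) //=; apply: eq_bigr => k _.
rewrite (eq_bigr (fun _ => Gk pz Kz k)); last first.
  by move=> w /eqP <-.
by rewrite (eq_bigl (fun w => w \in [pred w | key w == k])) // sumr_const.
Qed.

Lemma card_bits l : #|{: bits l}| = (2 ^ l)%N.
Proof. by rewrite card_ffun card_bool card_ord. Qed.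

Lemma S_eq (R : realType) l (pz : bits l -> R) Kz :
  \sum_z pz z = 1 -> (forall z y, \sum_t Kz z y t = 1) ->
  \sum_k Gk pz Kz k *+ (3 ^ l) = (3 / 4) ^+ l.
Proof.
move=> Hp HK.
rewrite -(pair_bigA _ (fun zy t => Gk pz Kz (zy, t) *+ 3 ^ l)) /=.
rewrite -(pair_bigA _ (fun z y => \sum_t Gk pz Kz ((z, y), t) *+ 3 ^ l)) /=.
under eq_bigr => z _.
  under eq_bigr => y _.
    rewrite sumrMnl /Gk /= -mulr_sumr HK mulr1.
  over.
  rewrite sumr_const card_bits.
over.
rewrite /= (eq_bigr (fun z => pz z * (((2 ^ l)%:R)^-1 * ((2 ^ (l + l))%:R)^-1 * (3 ^ l * 2 ^ l)%:R))); last first.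
  by move=> z _; rewrite !card_bits -mulrnA mulr_natr mulrnAr !mulrA.
rewrite -mulr_suml Hp mul1r.
rewrite expnD !natrM !natrX.
have h2 : (2 : R) ^+ l != 0 by rewrite expf_neq0 // pnatr_eq0.
have -> : (4 : R) = 2 * 2 by rewrite -natrM.
rewrite expr_div_n exprMn.
field.
by rewrite h2.
Qed.

Lemma Gk_ge0 (R : realType) l (pz : bits l -> R) Kz k :
  (forall z, 0 <= pz z) -> (forall z y t, 0 <= Kz z y t) -> 0 <= Gk pz Kz k.
Proof.
move=> Hp HK; rewrite /Gk; apply: mulr_ge0; last exact: HK.
by rewrite !mulr_ge0 ?invr_ge0 ?ler0n.
Qed.

Lemma value_le (R : realType) l (pz : bits l -> R) Kz :
  (forall z, 0 <= pz z) -> \sum_z pz z = 1 ->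
  (forall z y t, 0 <= Kz z y t) -> (forall z y, \sum_t Kz z y t = 1) ->
  \sum_(w : sample l) sample_prob pz w * Kz w.1.1 (boxplus w.1.1 w.2) (boxplus w.1.2 w.2)
  <= (3 / 4) ^+ l.
Proof.
move=> Hp0 Hp HK0 HK; rewrite value_eq -(S_eq Hp HK).
apply: ler_sum => k _; apply: ler_wpMn2l; first exact: Gk_ge0.
by case: k => [[z y] t]; apply: cnt_le.
Qed.

Lemma value_id (R : realType) l (pz : bits l -> R) :
  (forall z, 0 <= pz z) -> \sum_z pz z = 1 ->
  (3 / 4) ^+ l <= \sum_(w : sample l) sample_prob pz w *
    (fun z y t : bits l => ((t == y)%:R : R)) w.1.1 (boxplus w.1.1 w.2) (boxplus w.1.2 w.2).
Proof.
move=> Hp0 Hp.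
have HK : forall z y : bits l, \sum_t ((t == y)%:R : R) = 1.
  by move=> z y; rewrite (bigD1 y) //= eqxx big1 ?addr0 // => t /negbTE ->.
rewrite (value_eq pz (fun z y t : bits l => ((t == y)%:R : R))) -(S_eq Hp HK).
apply: ler_sum => -[[z y] t] _.
case: (eqVneq t y) => [->|ne].
  apply: ler_wpMn2l; first by apply: Gk_ge0 => // *; rewrite ler0n.
  exact: cnt_ge.
by rewrite /Gk /= (negbTE ne) mulr0 !mul0rn.
Qed.

Lemma sup_max (R : realType) (E : set R) m :
  E m -> (forall r, E r -> r <= m) -> sup E = m.
Proof.
move=> Em Hub; apply/le_anti/andP; split.
  by apply: ge_sup; [exists m | move=> r /Hub].
by apply: ub_le_sup => //; exists m => r /Hub.
Qed.

Lemma G_val (R : realType) l (pz : bits l -> R) :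
  (forall z, 0 <= pz z) -> \sum_z pz z = 1 ->
  guess_chance (sample_prob pz)
      (fun w : sample l => boxplus w.1.1 w.2)
      (fun w : sample l => boxplus w.1.2 w.2) = (3 / 4) ^+ l /\
  guess_chance (sample_prob pz)
      (fun w : sample l => (w.1.1, boxplus w.1.1 w.2))
      (fun w : sample l => boxplus w.1.2 w.2) = (3 / 4) ^+ l.
Proof.
move=> Hp0 Hp.
have HK : forall z y : bits l, \sum_t ((t == y)%:R : R) = 1.
  by move=> z y; rewrite (bigD1 y) //= eqxx big1 ?addr0 // => t /negbTE ->.
have HK0 : forall z y t : bits l, 0 <= ((t == y)%:R : R) by move=> *; rewrite ler0n.
have Hv := le_anti (introT andP (conj (value_le Hp0 Hp HK0 HK) (value_id Hp0 Hp))).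
split; apply: sup_max.
- exists (fun y t : bits l => ((t == y)%:R : R)); split; last by rewrite Hv.
  rewrite /kernel; split=> [a b|a]; first by rewrite ler0n.
  exact: (HK a a).
- move=> r [K [[K0 K1] ->]].
  exact: (value_le Hp0 Hp (Kz := fun z y t => K y t)).
- exists (fun (zy : bits l * bits l) (t : bits l) => ((t == zy.2)%:R : R)); split; last by rewrite Hv.
  rewrite /kernel; split=> [a b|a]; first by rewrite ler0n.
  exact: (HK a.1 a.2).
- move=> r [K [[K0 K1] ->]].
  exact: (value_le Hp0 Hp (Kz := fun z y t => K (z, y) t)).
Qed.

Unset Implicit Arguments.

Theorem proposition5p7 (R : realType) (pz : forall l : nat, bits l -> R)
  (pz_ge0 : forall l (z : bits l), 0 <= pz l z)
  (pz_sum1 : forall l, \sum_(z : bits l) pz l z = 1) :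
  let G1 := fun l : nat =>
    guess_chance (sample_prob (pz l))
      (fun w : sample l => boxplus w.1.1 w.2)
      (fun w : sample l => boxplus w.1.2 w.2) in
  let G2 := fun l : nat =>
    guess_chance (sample_prob (pz l))
      (fun w : sample l => (w.1.1, boxplus w.1.1 w.2))
      (fun w : sample l => boxplus w.1.2 w.2) in
  eq_negl G1 G2 /\ eq_negl G2 (fun l => (3 / 4 : R) ^+ l).
Proof.
move=> G1 G2.
have E1 : forall l, G1 l = (3 / 4) ^+ l.
  by move=> l; exact: (G_val (pz_ge0 l) (pz_sum1 l)).1.
have E2 : forall l, G2 l = (3 / 4) ^+ l.
  by move=> l; exact: (G_val (pz_ge0 l) (pz_sum1 l)).2.
have N0 : forall f g : nat -> R, (forall n, f n = g n) -> eq_negl f g.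
  move=> f g fg c; exists 1%N => n hn.
  by rewrite fg subrr normr0 invr_gt0 exprn_gt0 // ltr0n.
by split; apply: N0 => n; rewrite ?E1 ?E2.
Qed.
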